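(* Let $n\ge1$ and $D_n^{(\mathsf{cyc},\mathsf{exc})}(q,t)=\sum_{\sigma\in\mathfrak{D}_n}q^{\mathsf{cyc}\,\sigma}t^{\mathsf{exc}\,\sigma}$. Then $$D_{n}^{(\mathsf{cyc}, \mathsf{exc})}(q, t)=\left(\frac{1+xt}{1+x}\right)^{n}P^{(\mathsf{cyc}, \mathsf{cpk},\mathsf{exc})}\left(\mathfrak{D}_n; q, \frac{(1+x)^{2}t}{(x+t)(1+xt)},\frac{x+t}{1+xt}\right),$$ equivalently, $$P^{(\mathsf{cyc}, \mathsf{cpk},\mathsf{exc})}(\mathfrak{D}_n; q, x,t)=\left(\frac{1+u}{1+uv}\right)^{n}D_{n}^{(\mathsf{cyc}, \mathsf{exc})}(q, v),$$ where $u=\frac{1+t^{2}-2xt-(1-t)\sqrt{(1+t)^{2}-4xt}}{2(1-x)t}$ and $v=\frac{(1+t)^{2}-2xt-(1+t)\sqrt{(1+t)^{2}-4xt}}{2xt}$.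
   Context: $\mathfrak{D}_n$ is the set of derangements of $[n]$ (permutations with no fixed point). $P^{(\mathsf{stat}_1,\ldots,\mathsf{stat}_m)}(\Omega;t_1,\ldots,t_m)=\sum_{\sigma\in\Omega}\prod_j t_j^{\mathsf{stat}_j\sigma}$. For a permutation $\sigma$: $\mathsf{cyc}\,\sigma$ is its number of cycles, $\mathsf{exc}\,\sigma=\#\{i:\sigma(i)>i\}$, and $\mathsf{cpk}\,\sigma$ is the number of cyclic peaks, i.e. values $x$ with $\sigma^{-1}(x)<x>\sigma(x)$. *)

(* Defs.v *)
From HB Require Import structures.
From mathcomp Require Import all_boot all_order all_algebra all_fingroup.
Set Implicit Arguments. Unset Strict Implicit. Unset Printing Implicit Defensive.
Import Order.TTheory GRing.Theory Num.Theory.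

(* Permutations of [n] are modelled by 'S_n = {perm 'I_n}; the shift
   {1..n} -> {0..n-1} does not affect any of the statistics below. *)

Definition derangement n (s : 'S_n) : bool := [forall i, s i != i].

Definition cyc n (s : 'S_n) : nat := #|porbits s|.

Definition exc n (s : 'S_n) : nat := #|[set i : 'I_n | i < s i]|.

Definition cpk n (s : 'S_n) : nat :=
  #|[set x : 'I_n | ((s^-1)%g x < x) && (s x < x)]|.

Local Open Scope ring_scope.

Definition D_cyc_exc (R : comNzRingType) (n : nat) (q t : R) : R :=
  \sum_(s : 'S_n | derangement s) q ^+ cyc s * t ^+ exc s.

Definition P_cyc_cpk_exc (R : comNzRingType) (n : nat) (q x t : R) : R :=
  \sum_(s : 'S_n | derangement s) q ^+ cyc s * x ^+ cpk s * t ^+ exc s.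

(* Main.v *)
Require Import Defs.
From HB Require Import structures.
From mathcomp Require Import all_boot all_order all_algebra all_fingroup.
From mathcomp Require Import zify ring.
Set Implicit Arguments. Unset Strict Implicit. Unset Printing Implicit Defensive.
Import Order.TTheory GRing.Theory Num.Theory.

Lemma find_iota_eq (a : pred nat) N k :
  k < N -> a k -> (forall i, i < k -> ~~ a i) -> find a (iota 0 N) = k.
Proof.
move=> kN ak bef.
have hs : has a (iota 0 N).
  by apply/hasP; exists k => //; rewrite mem_iota.
have fl : find a (iota 0 N) < N by move: hs; rewrite has_find size_iota.
have af := nth_find 0 hs; rewrite nth_iota // add0n in af.
case: (ltngtP (find a (iota 0 N)) k) => // h.
  by move: (bef _ h); rewrite af.
by have := before_find 0 h; rewrite nth_iota ?add0n ?ak // (ltn_trans h fl).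
Qed.

Section Hop.
Variable n : nat.
Implicit Types (s r : 'S_n) (z w : 'I_n).

Definition ddb s z := (z < (s^-1)%g z) && (s z < z).
Definition dab s z := ((s^-1)%g z < z) && (z < s z).
Definition mlen s z := find (fun j => z <= iter j.+1 s z) (iota 0 n).
Definition eblk s z := iter (mlen s z) s z.
Definition psi s z := (tperm z (eblk s z) * tperm ((s^-1)%g z) z * s)%g.
Definition phi s z :=
  if ddb s z then psi s z else if dab s z then ((psi (s^-1)%g z)^-1)%g else s.

Lemma iter_inj_perm s k : injective (iter k s).
Proof. by move=> a b; rewrite -!permX; apply: perm_inj. Qed.

Lemma mlen_spec s z : ddb s z ->
  [/\ 0 < mlen s z, mlen s z < n,
      (forall j, 0 < j <= mlen s z -> iter j s z < z) &
      z < iter (mlen s z).+1 s z].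
Proof.
case/andP=> h1 h2.
set a := (fun j => z <= iter j.+1 s z).
have hs : has a (iota 0 n).
  apply/hasP; exists (#|porbit s z|.-1).
    rewrite mem_iota add0n /=.
    have := max_card (mem (porbit s z)); rewrite card_ord.
    have := card_porbit_neq0 s z; case: #|_| => //= k _ hk; lia.
  rewrite /a prednK ?lt0n ?card_porbit_neq0 // iter_porbit //.
have fl : mlen s z < n by move: hs; rewrite has_find size_iota.
have af := nth_find 0 hs; rewrite nth_iota // add0n in af.
have bef : forall j, 0 < j <= mlen s z -> iter j s z < z.
  move=> [|j] // /andP[_ hj].
  have := before_find 0 hj; rewrite nth_iota ?add0n; last by lia.
  by rewrite /a => /negbT; rewrite -ltnNge.
have m0 : 0 < mlen s z.
  move: af; rewrite /mlen; case: (find _ _) => //= af.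
  by move: af; rewrite /a /=; lia.
split=> //.
rewrite /a in af; rewrite ltn_neqAle af andbT.
apply/eqP=> e.
have : iter (mlen s z) s z = (s^-1)%g z.
  by apply: (@perm_inj _ s); rewrite permKV -iterS; exact/esym/val_inj.
have := bef (mlen s z); rewrite m0 leqnn => /(_ isT) hb he.
by move: hb; rewrite he; lia.
Qed.


Lemma ord_ltn_neq (a b : 'I_n) : a < b -> a != b.
Proof. by move=> h; apply/eqP=> e; move: h; rewrite e ltnn. Qed.

Lemma blk_neq s z i j : ddb s z -> 0 < i -> i < j -> j <= mlen s z ->
  iter i s z != iter j s z.
Proof.
move=> hd i0 ij jm; have [_ _ hb _] := mlen_spec hd.
apply/eqP => E.
have ez : z = iter (j - i) s z.
  by apply: (@iter_inj_perm s i); rewrite -iterD subnKC ?(ltnW ij).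
suff : 0 < j - i <= mlen s z by move/hb; rewrite -ez ltnn.
lia.
Qed.

Lemma blk_facts s z : ddb s z ->
  [/\ eblk s z < z, z < (s^-1)%g z, s z < z & z < s (eblk s z)].
Proof.
move=> hd; have [m0 _ hb hc] := mlen_spec hd.
case/andP: (hd) => h1 h2; split => //.
by apply: hb; rewrite m0 leqnn.
Qed.

Lemma psiE s z w : ddb s z ->
  psi s z w = if w == (s^-1)%g z then s z else if w == eblk s z then z
              else if w == z then s (eblk s z) else s w.
Proof.
move=> hd; have [he hp _ _] := blk_facts hd.
have zp := ord_ltn_neq hp; have ez := ord_ltn_neq he.
have ep : eblk s z != (s^-1)%g z by apply: ord_ltn_neq; lia.
rewrite /psi !permM.
case: (eqVneq w ((s^-1)%g z)) => [->|h1].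
  by rewrite tpermD // ?tpermL // eq_sym.
case: (eqVneq w (eblk s z)) => [->|h2].
  by rewrite tpermR tpermR permKV.
case: (eqVneq w z) => [->|h3].
  by rewrite tpermL tpermD // eq_sym.
by rewrite tpermD 1?eq_sym // tpermD // eq_sym.
Qed.

Lemma psiVE s z w : ddb s z ->
  (psi s z)^-1%g w = if w == s z then (s^-1)%g z else if w == z then eblk s z
              else if w == s (eblk s z) then z else (s^-1)%g w.
Proof.
move=> hd; have [he hp hs hc] := blk_facts hd.
have ep : eblk s z != (s^-1)%g z by apply: ord_ltn_neq; lia.
apply: (@perm_inj _ (psi s z)); rewrite permKV.
case: (eqVneq w (s z)) => [->|h1]; first by rewrite psiE // eqxx.
case: (eqVneq w z) => [->|h2].
  by rewrite psiE // (negbTE ep) eqxx.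
case: (eqVneq w (s (eblk s z))) => [->|h3].
  rewrite psiE // ifF; last by apply/negbTE/ord_ltn_neq.
  by rewrite ifF ?eqxx //; apply/negbTE; rewrite eq_sym; apply/ord_ltn_neq.
rewrite psiE //.
rewrite ifF; last by apply/negbTE; apply: contra h2 => /eqP/(congr1 s); rewrite !permKV => ->.
rewrite ifF; last by apply/negbTE; apply: contra h3 => /eqP/(congr1 s); rewrite !permKV => ->.
rewrite ifF; last by apply/negbTE; apply: contra h1 => /eqP/(congr1 s); rewrite !permKV => ->.
by rewrite permKV.
Qed.

Lemma psi_iter s z i : ddb s z -> 0 < i <= mlen s z ->
  iter i (psi s z) ((s^-1)%g z) = iter i s z.
Proof.
move=> hd; have [m0 mn hb hc] := mlen_spec hd.
elim: i => [|i IH] // /andP[_ hi].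
case: i IH hi => [|i] IH hi.
  by rewrite /= psiE // eqxx.
rewrite iterS IH; last by lia.
rewrite psiE //.
have hz : iter i.+1 s z < z by apply: hb; lia.
rewrite ifF; last by apply/negbTE/ord_ltn_neq; have [_ hp _ _] := blk_facts hd; lia.
rewrite ifF; last by apply/negbTE/blk_neq.
by rewrite ifF //; apply/negbTE/ord_ltn_neq.
Qed.

Lemma psi_iter_last s z : ddb s z ->
  iter (mlen s z).+1 (psi s z) ((s^-1)%g z) = z.
Proof.
move=> hd; have [m0 mn hb hc] := mlen_spec hd.
by rewrite iterS psi_iter ?m0 ?leqnn // psiE // -/(eblk s z) ifF ?eqxx //;
  apply/negbTE/ord_ltn_neq; have [he hp _ _] := blk_facts hd; lia.
Qed.


Lemma dd_inv r z : ddb (r^-1)%g z = dab r z.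
Proof. by rewrite /ddb /dab invgK andbC. Qed.

Lemma da_inv r z : dab (r^-1)%g z = ddb r z.
Proof. by rewrite /ddb /dab invgK andbC. Qed.

Lemma psi_z s z : ddb s z -> psi s z z = s (eblk s z).
Proof.
move=> hd; have [he hp _ _] := blk_facts hd.
rewrite psiE // ifF; last by apply/negbTE/ord_ltn_neq.
by rewrite ifF ?eqxx //; apply/negbTE; rewrite eq_sym; apply/ord_ltn_neq.
Qed.

Lemma psiV_z s z : ddb s z -> (psi s z)^-1%g z = eblk s z.
Proof.
move=> hd; have [he hp hs _] := blk_facts hd.
by rewrite psiVE // ifF ?eqxx //; apply/negbTE; rewrite eq_sym; apply/ord_ltn_neq.
Qed.

Lemma psi_da s z : ddb s z -> dab (psi s z) z && ~~ ddb (psi s z) z.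
Proof.
move=> hd; have [he hp hs hc] := blk_facts hd.
rewrite /dab /ddb psi_z // psiV_z // he hc /=; lia.
Qed.

Lemma psi_uiter s z j : ddb s z -> j <= (mlen s z).+1 ->
  iter j ((psi s z)^-1)%g z = iter ((mlen s z).+1 - j) (psi s z) ((s^-1)%g z).
Proof.
move=> hd; elim: j => [|j IH] hj.
  by rewrite subn0 psi_iter_last.
rewrite iterS IH; last by lia.
have -> : (mlen s z).+1 - j = ((mlen s z).+1 - j.+1).+1 by lia.
by rewrite iterS permK.
Qed.

Lemma psi_u_dd s z : ddb s z -> ddb ((psi s z)^-1)%g z.
Proof. by move=> hd; rewrite dd_inv; case/andP: (psi_da hd). Qed.

Lemma psi_u_mlen s z : ddb s z -> mlen ((psi s z)^-1)%g z = mlen s z.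
Proof.
move=> hd; have [m0 mn hb hc] := mlen_spec hd.
have [he hp hs _] := blk_facts hd.
apply: find_iota_eq => //.
  by rewrite psi_uiter // subnn /= ltnW.
move=> i hi; rewrite psi_uiter //; last by lia.
rewrite psi_iter //; last by lia.
rewrite -ltnNge; apply: hb; lia.
Qed.

Lemma psi_u_eblk s z : ddb s z -> eblk ((psi s z)^-1)%g z = s z.
Proof.
move=> hd; have [m0 mn hb hc] := mlen_spec hd.
rewrite /eblk psi_u_mlen // psi_uiter //.
by rewrite (_ : _ - _ = 1) /=; [rewrite psiE // eqxx | lia].
Qed.

Lemma psi_invol s z : ddb s z -> psi ((psi s z)^-1)%g z = (s^-1)%g.
Proof.
move=> hd; have [he hp hs hc] := blk_facts hd.
have hu := psi_u_dd hd.
apply/permP => w; rewrite psiE // invgK psi_u_eblk // psi_z // psiV_z //.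
case: (eqVneq w (s (eblk s z))) => [->|h1]; first by rewrite permK.
case: (eqVneq w (s z)) => [->|h2]; first by rewrite permK.
case: (eqVneq w z) => [->|h3].
  by rewrite psiVE // eqxx.
by rewrite psiVE // (negbTE h1) (negbTE h2) (negbTE h3).
Qed.


Lemma dd_da_excl s z : ddb s z -> ~~ dab s z.
Proof. by rewrite /ddb /dab; case/andP=> h1 h2; apply/negP=> /andP[h3 h4]; lia. Qed.

Lemma phi_invol z : involutive (phi ^~ z).
Proof.
move=> s; rewrite /phi.
case: (boolP (ddb s z)) => hd.
  have /andP[hda hnd] := psi_da hd.
  by rewrite (negbTE hnd) hda psi_invol // invgK.
case: (boolP (dab s z)) => ha; last by rewrite (negbTE hd) (negbTE ha).
have hd' : ddb (s^-1)%g z by rewrite dd_inv.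
have /andP[hda _] := psi_da hd'.
by rewrite dd_inv hda psi_invol // invgK.
Qed.

Definition code s w := (((s^-1)%g w < w), (s w < w)).

Lemma code_inv s w : code (s^-1)%g w = ((code s w).2, (code s w).1).
Proof. by rewrite /code invgK. Qed.

Lemma psi_code s z w : ddb s z -> w != z -> code (psi s z) w = code s w.
Proof.
move=> hd wz; have [he hp hs hc] := blk_facts hd.
rewrite /code psiE // psiVE // (negbTE wz); congr pair.
  case: (eqVneq w (s z)) => [->|h1]; first by rewrite permK; lia.
  case: (eqVneq w (s (eblk s z))) => [->|h2]; first by rewrite permK; lia.
  done.
case: (eqVneq w ((s^-1)%g z)) => [->|h1]; first by rewrite permKV; lia.
case: (eqVneq w (eblk s z)) => [->|h2]; first by lia.
done.
Qed.

Lemma phi_code s z w : w != z -> code (phi s z) w = code s w.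
Proof.
move=> wz; rewrite /phi.
case: (boolP (ddb s z)) => hd; first exact: psi_code.
case: (boolP (dab s z)) => ha //.
have hd' : ddb (s^-1)%g z by rewrite dd_inv.
by rewrite code_inv psi_code // code_inv; case: (code s w).
Qed.

Lemma code_dd s z : (code s z == (false, true)) = ddb s z.
Proof.
rewrite /code /ddb; apply/eqP/andP.
  case=> /negbT h1 h2; split => //.
  rewrite ltn_neqAle (_ : z <= _); last by lia.
  rewrite andbT; apply/eqP => e.
  have : s z = z by rewrite {1}(val_inj e) permKV.
  by move=> e2; move: h2; rewrite e2 ltnn.
by case=> h1 h2; rewrite h2; congr pair; lia.
Qed.

Lemma code_da s z : (code s z == (true, false)) = dab s z.
Proof.
rewrite /code /dab; apply/eqP/andP.
  case=> h1 /negbT h2; split => //.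
  rewrite ltn_neqAle (_ : z <= _); last by lia.
  rewrite andbT; apply/eqP => e.
  have : (s^-1)%g z = z by rewrite {1}(val_inj e) permK.
  by move=> e2; move: h1; rewrite e2 ltnn.
by case=> h1 h2; rewrite h1; congr pair; lia.
Qed.

Lemma phi_dd s z : ddb (phi s z) z = dab s z.
Proof.
rewrite /phi.
case: (boolP (ddb s z)) => hd.
  by have /andP[_ /negbTE ->] := psi_da hd; rewrite (negbTE (dd_da_excl hd)).
case: (boolP (dab s z)) => ha; last by rewrite (negbTE hd).
have hd' : ddb (s^-1)%g z by rewrite dd_inv.
by rewrite dd_inv; case/andP: (psi_da hd').
Qed.

Lemma psi_der s z : ddb s z -> derangement s -> derangement (psi s z).
Proof.
move=> hd /forallP hs; have [he hp hsz hc] := blk_facts hd.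
apply/forallP => w; rewrite psiE //.
case: (eqVneq w ((s^-1)%g z)) => [->|h1]; first by apply: ord_ltn_neq; lia.
case: (eqVneq w (eblk s z)) => [->|h2]; first by rewrite eq_sym; apply: ord_ltn_neq.
case: (eqVneq w z) => [->|h3]; first by rewrite eq_sym; apply: ord_ltn_neq.
exact: hs.
Qed.

Lemma der_inv s : derangement (s^-1)%g = derangement s.
Proof.
apply/forallP/forallP => h w; apply: contra (h w) => /eqP e.
  by rewrite -{1}e permK.
by rewrite -{1}e permKV.
Qed.

Lemma phi_der s z : derangement (phi s z) = derangement s.
Proof.
suff H : forall s, derangement s -> derangement (phi s z).
  apply/idP/idP; last exact: H.
  by move/H; rewrite phi_invol.
move=> {}s ds; rewrite /phi.
case: (boolP (ddb s z)) => hd; first exact: psi_der.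
case: (boolP (dab s z)) => ha //.
have hd' : ddb (s^-1)%g z by rewrite dd_inv.
by rewrite der_inv; apply: psi_der; rewrite ?der_inv.
Qed.


Lemma porbit_sub s (t : 'S_n) : (forall w, t w \in porbit s w) ->
  forall w, porbit t w \subset porbit s w.
Proof.
move=> H w; apply/subsetP => y /porbitP [i ->].
elim: i => [|i IH]; first by rewrite expg0 perm1 porbit_id.
rewrite expgSr permM.
have <- : porbit s ((t ^+ i)%g w) = porbit s w by apply/eqP; rewrite eq_porbit_mem.
exact: H.
Qed.

Lemma porbits_eq s (t : 'S_n) : (forall w, t w \in porbit s w) ->
  (forall w, s w \in porbit t w) -> porbits t = porbits s.
Proof.
move=> H1 H2; rewrite /porbits; apply: eq_imset => w.
by apply/eqP; rewrite eqEsubset !porbit_sub.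
Qed.

Lemma mem_porbit1 s w : s w \in porbit s w.
Proof. by apply/porbitP; exists 1; rewrite expg1. Qed.

Lemma psi_cyc s z : ddb s z -> cyc (psi s z) = cyc s.
Proof.
move=> hd; have [he hp hsz hc] := blk_facts hd.
rewrite /cyc; suff -> : porbits (psi s z) = porbits s by [].
apply: porbits_eq => w.
  rewrite psiE //.
  case: (eqVneq w ((s^-1)%g z)) => [->|h1].
    apply/porbitP; exists 2; by rewrite expgS expg1 permM permKV.
  case: (eqVneq w (eblk s z)) => [->|h2].
    by rewrite porbit_sym /eblk -permX mem_porbit.
  case: (eqVneq w z) => [->|h3].
    by rewrite (_ : s (eblk s z) = iter (mlen s z).+1 s z) // -permX mem_porbit.
  exact: mem_porbit1.
case: (eqVneq w ((s^-1)%g z)) => [->|h1].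
  by rewrite permKV; apply/porbitP; exists (mlen s z).+1; rewrite permX psi_iter_last.
have ep : eblk s z != (s^-1)%g z by apply: ord_ltn_neq; lia.
case: (eqVneq w (eblk s z)) => [->|h2].
  apply/porbitP; exists 2; rewrite expgS expg1 permM.
  by rewrite [X in psi s z X]psiE // (negbTE ep) eqxx psi_z.
case: (eqVneq w z) => [->|h3].
  have : z \in porbit (psi s z) ((s^-1)%g z).
    by apply/porbitP; exists (mlen s z).+1; rewrite permX psi_iter_last.
  move=> H; have /eqP -> : porbit (psi s z) z == porbit (psi s z) ((s^-1)%g z) by rewrite eq_porbit_mem.
  have -> : s z = psi s z ((s^-1)%g z) by rewrite psiE // eqxx.
  exact: mem_porbit1.
have -> : s w = psi s z w by rewrite psiE // (negbTE h1) (negbTE h2) (negbTE h3).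
exact: mem_porbit1.
Qed.

Lemma cyc_inv s : cyc (s^-1)%g = cyc s.
Proof. by rewrite /cyc porbitsV. Qed.

Lemma phi_cyc s z : cyc (phi s z) = cyc s.
Proof.
rewrite /phi.
case: (boolP (ddb s z)) => hd; first exact: psi_cyc.
case: (boolP (dab s z)) => ha //.
have hd' : ddb (s^-1)%g z by rewrite dd_inv.
by rewrite cyc_inv psi_cyc // cyc_inv.
Qed.

End Hop.

Local Open Scope ring_scope.

Definition gtr (F : comNzRingType) (f : bool * bool -> F) (c : bool * bool) : F :=
  match c with
  | (true, false) => f (true, false) + f (false, true)
  | (false, true) => 0
  | _ => f c
  end.

Section Sum.
Variables (F : comNzRingType) (n : nat) (q : F) (f : bool * bool -> F).

Definition Hk (k : nat) (s : 'S_n) : F :=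
  q ^+ cyc s * \prod_(w : 'I_n) (if (w < k)%N then gtr f (code s w) else f (code s w)).

Lemma fgtr c : f c - gtr f c =
  f (false, true) * ((c == (false, true))%:R - (c == (true, false))%:R).
Proof. by case: c => [[] []] /=; ring. Qed.

Lemma prodD1 (G : 'I_n -> F) z : \prod_w G w = G z * \prod_(w | w != z) G w.
Proof. by rewrite (bigD1 z). Qed.

Lemma Hk_step k (kn : (k < n)%N) :
  \sum_(s | derangement s) Hk k s = \sum_(s | derangement s) Hk k.+1 s.
Proof.
pose z := Ordinal kn.
pose A s := q ^+ cyc s *
  \prod_(w | w != z) (if (w < k)%N then gtr f (code s w) else f (code s w)).
have zk : (z < k)%N = false by rewrite ltnn.
have zk1 : (z < k.+1)%N by rewrite ltnSn.
have HA : forall s, Hk k s = A s * f (code s z) /\ Hk k.+1 s = A s * gtr f (code s z).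
  move=> s; rewrite /Hk /A; split.
    by rewrite (prodD1 _ z) zk -mulrA [_ * f _]mulrC.
  rewrite (prodD1 _ z) zk1 -mulrA [_ * gtr _ _]mulrC; congr (_ * (_ * _)).
  apply: eq_bigr => w wz; rewrite ltnS leq_eqVlt.
  have -> : (val w == k) = false by apply/negbTE; apply: contra wz => /eqP e; apply/eqP/val_inj.
  by [].
have Aphi : forall s, A (phi s z) = A s.
  move=> s; rewrite /A phi_cyc; congr (_ * _); apply: eq_bigr => w wz.
  by rewrite phi_code.
apply/eqP; rewrite -subr_eq0 -sumrB.
under eq_bigr => s _ do rewrite (proj1 (HA s)) (proj2 (HA s)) -mulrBr fgtr.
under eq_bigr => s _ do rewrite code_dd code_da mulrCA mulrBr.
rewrite -mulr_sumr sumrB.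
have E : \sum_(s | derangement s) A s * (ddb s z)%:R =
         \sum_(s | derangement s) A s * (dab s z)%:R.
  rewrite (reindex_inj (inv_inj (phi_invol z))).
  apply: eq_big => [s|s _]; first by rewrite phi_der.
  by rewrite Aphi phi_dd.
by rewrite E subrr mulr0.
Qed.
Lemma hop_sum :
  \sum_(s : 'S_n | derangement s) q ^+ cyc s * \prod_(w : 'I_n) f (code s w) =
  \sum_(s : 'S_n | derangement s) q ^+ cyc s * \prod_(w : 'I_n) gtr f (code s w).
Proof.
have E0 : forall s, q ^+ cyc s * \prod_(w : 'I_n) f (code s w) = Hk 0 s.
  by move=> s; rewrite /Hk.
have En : forall s, q ^+ cyc s * \prod_(w : 'I_n) gtr f (code s w) = Hk n s.
  by move=> s; rewrite /Hk; congr (_ * _); apply: eq_bigr => w _; rewrite ltn_ord.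
under eq_bigr => s _ do rewrite E0.
under [RHS]eq_bigr => s _ do rewrite En.
suff : forall k, (k <= n)%N ->
  \sum_(s | derangement s) Hk 0 s = \sum_(s | derangement s) Hk k s by apply.
elim => [//|k IH] kn.
by rewrite IH ?(ltnW kn) // Hk_step.
Qed.


End Sum.
Local Open Scope ring_scope.

Definition fw (F : comNzRingType) (X T : F) (c : bool * bool) : F :=
  (if c.1 && c.2 then X else 1) * (if c.2 then 1 else T).

Section Fin.
Variables (F : comNzRingType) (n : nat).

Lemma weight_fw (X T : F) (s : 'S_n) : derangement s ->
  X ^+ cpk s * T ^+ exc s = \prod_(w : 'I_n) fw X T (code s w).
Proof.
move=> /forallP ds; rewrite big_split /=; congr (_ * _).
  by rewrite -big_mkcond prodr_const /cpk cardsE.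
rewrite /exc (eq_bigr (fun w : 'I_n => if (w < s w)%N then T else 1)); last first.
  move=> w _ /=; have := ds w; rewrite /code /=; case: ltngtP => // h1 /eqP [].
  exact: val_inj.
by rewrite -big_mkcond prodr_const cardsE.
Qed.

Lemma count_ab (s : 'S_n) : derangement s ->
  (\sum_(w : 'I_n) (nat_of_bool (code s w).1 + nat_of_bool (code s w).2))%N = n.
Proof.
move=> /forallP ds; rewrite big_split /=.
rewrite (reindex_inj (@perm_inj _ s)) /=.
under eq_bigr => w _ do rewrite permK.
rewrite -big_split /=.
rewrite (eq_bigr (fun _ => 1%N)); last first.
  move=> w _; have := ds w; rewrite /code /=; case: ltngtP => // h1 /eqP [].
  exact: val_inj.
by rewrite sum1_card card_ord.
Qed.

End Fin.


Lemma exc_neq0 n (hn : (1 <= n)%N) (s : 'S_n) : derangement s -> exc s != 0%N.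
Proof.
move=> /forallP ds; rewrite /exc -lt0n card_gt0; apply/set0Pn.
exists (Ordinal hn); rewrite inE /= lt0n.
apply: contra (ds (Ordinal hn)) => /eqP h; apply/eqP/val_inj; exact: h.
Qed.

Lemma cpk_neq0 n (hn : (1 <= n)%N) (s : 'S_n) : derangement s -> cpk s != 0%N.
Proof.
move=> /forallP ds; rewrite /cpk -lt0n card_gt0; apply/set0Pn.
have wn : (n.-1 < n)%N by lia.
have dsi := ds ((s^-1)%g (Ordinal wn)); rewrite permKV eq_sym in dsi.
exists (Ordinal wn); rewrite inE /=.
have h1 := ltn_ord ((s^-1)%g (Ordinal wn)); have h2 := ltn_ord (s (Ordinal wn)).
have h3 := ds (Ordinal wn).
apply/andP; split.
  rewrite ltn_neqAle; apply/andP; split; last by lia.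
  apply: contra dsi => /eqP h; apply/eqP/val_inj; exact: h.
rewrite ltn_neqAle; apply/andP; split; last by lia.
apply: contra h3 => /eqP h; apply/eqP/val_inj; exact: h.
Qed.

Lemma prod_cgb (F : comNzRingType) m (G : 'I_m -> F) (c b : F) :
  \prod_(w < m) (c * G w * b) = c ^+ m * \prod_(w < m) G w * b ^+ m.
Proof.
elim: m G => [|m IH] G; first by rewrite !big_ord0 !expr0 !mul1r.
rewrite !big_ord_recr IH !exprSr /=; ring.
Qed.

Theorem form1 n (hn : (1 <= n)%N) (F : fieldType) (q x t : F) :
  1 + x != 0 -> x + t != 0 -> 1 + x * t != 0 ->
  D_cyc_exc n q t =
    ((1 + x * t) / (1 + x)) ^+ n *
    P_cyc_cpk_exc n q ((1 + x) ^+ 2 * t / ((x + t) * (1 + x * t)))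
                      ((x + t) / (1 + x * t)).
Proof.
move=> h1 h2 h3.
have [->|t0] := eqVneq t 0.
  rewrite /D_cyc_exc big1; last first.
    by move=> s ds; rewrite expr0n (negbTE (exc_neq0 hn ds)) mulr0.
  rewrite /P_cyc_cpk_exc big1 ?mulr0 //.
  move=> s ds; rewrite mul0r expr0n (negbTE (cpk_neq0 hn ds)).
  by rewrite mulr0 mul0r.
set X := (1 + x) ^+ 2 * t / ((x + t) * (1 + x * t)).
set T := (x + t) / (1 + x * t).
set c := (1 + x * t) / (1 + x).
have LD : D_cyc_exc n q t =
  \sum_(s : 'S_n | derangement s) q ^+ cyc s * \prod_(w : 'I_n) gtr (fw 1 t) (code s w).
  rewrite /D_cyc_exc -hop_sum; apply: eq_bigr => s ds.
  by rewrite -weight_fw // expr1n mul1r.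
have LP : P_cyc_cpk_exc n q X T =
  \sum_(s : 'S_n | derangement s) q ^+ cyc s * \prod_(w : 'I_n) gtr (fw X T) (code s w).
  rewrite /P_cyc_cpk_exc -hop_sum; apply: eq_bigr => s ds.
  by rewrite -mulrA weight_fw.
rewrite LD LP mulr_sumr; apply: eq_bigr => s ds; rewrite mulrCA; congr (_ * _).
set b := (1 + x) * t / (x + t).
have b0 : b != 0 by rewrite /b mulf_neq0 ?invr_eq0 // mulf_neq0.
have key : forall cw : bool * bool,
    gtr (fw 1 t) cw * b ^+ (nat_of_bool cw.1 + nat_of_bool cw.2) = c * gtr (fw X T) cw * b.
  case => [[] []]; rewrite /gtr /fw /b /c /X /T /=; field; rewrite ?h1 ?h2 ?h3 //.
apply: (mulIf (expf_neq0 n b0)).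
have E : \prod_(w < n) gtr (fw 1 t) (code s w) * b ^+ n =
  \prod_(w < n) (gtr (fw 1 t) (code s w) *
     b ^+ (nat_of_bool (code s w).1 + nat_of_bool (code s w).2)).
  by rewrite big_split /= prodrXr count_ab.
rewrite E; under eq_bigr => w _ do rewrite key.
exact: prod_cgb.
Qed.
Local Open Scope ring_scope.

Lemma pmul (R : comNzRingType) (s d p0 p1 r0 r1 : R) : s ^+ 2 = d ->
  (p0 + p1 * s) * (r0 + r1 * s) = (p0 * r0 + p1 * r1 * d) + (p0 * r1 + p1 * r0) * s.
Proof. by move=> h; rewrite -h; ring. Qed.

Theorem form2 n (hn : (1 <= n)%N) (R : rcfType) (q x t : R) :
      x != 0 -> x != 1 -> t != 0 -> 0 <= (1 + t) ^+ 2 - 4%:R * x * t ->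
      let s := Num.sqrt ((1 + t) ^+ 2 - 4%:R * x * t) in
      let u := (1 + t ^+ 2 - 2%:R * x * t - (1 - t) * s) / (2%:R * (1 - x) * t) in
      let v := ((1 + t) ^+ 2 - 2%:R * x * t - (1 + t) * s) / (2%:R * x * t) in
      1 + u * v != 0 ->
      P_cyc_cpk_exc n q x t = ((1 + u) / (1 + u * v)) ^+ n * D_cyc_exc n q v.
Proof.
move=> hx0 hx1 ht0 hd s u v huv.
set d := (1 + t) ^+ 2 - 4%:R * x * t.
have hs : s ^+ 2 = d by rewrite /s sqr_sqrtr.
have two0 : 2%:R != 0 :> R by rewrite pnatr_eq0.
have hx1' : 1 - x != 0 by rewrite subr_eq0 eq_sym.
set D1 := 2%:R * (1 - x) * t.
set D2 := 2%:R * x * t.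
have D10 : D1 != 0 by rewrite /D1 !mulf_neq0.
have D20 : D2 != 0 by rewrite /D2 !mulf_neq0.
set a := 1 + t ^+ 2 - 2%:R * x * t.
set b := - (1 - t).
set c := (1 + t) ^+ 2 - 2%:R * x * t.
set e := - (1 + t).
have eu : u = (a + b * s) / D1 by rewrite /u /a /b /D1; congr (_ / _); ring.
have ev : v = (c + e * s) / D2 by rewrite /v /c /e /D2; congr (_ / _); ring.
have I1 : u + v = t * (1 + u * v).
  have K : (a + b * s) * D2 + (c + e * s) * D1 - t * (D1 * D2 + (a + b * s) * (c + e * s)) = 0.
    rewrite (pmul _ _ _ _ hs) /a /b /c /e /d /D1 /D2; ring.
  apply/eqP; rewrite -subr_eq0; apply/eqP.
  rewrite eu ev.
  have -> : (a + b * s) / D1 + (c + e * s) / D2 - t * (1 + (a + b * s) / D1 * ((c + e * s) / D2)) =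
    ((a + b * s) * D2 + (c + e * s) * D1 - t * (D1 * D2 + (a + b * s) * (c + e * s))) / (D1 * D2).
    by field; rewrite D10 D20.
  by rewrite K mul0r.
have I2 : (1 + u) ^+ 2 * v = x * t * (1 + u * v) ^+ 2.
  have K : ((D1 + a) + b * s) ^+ 2 * (c + e * s) * D2 -
           x * t * ((D1 * D2 + a * c + b * e * d) + (a * e + b * c) * s) ^+ 2 = 0.
    rewrite !expr2 !(pmul _ _ _ _ hs) /a /b /c /e /d /D1 /D2; ring.
  have Kuv : D1 * D2 + (a + b * s) * (c + e * s) =
      (D1 * D2 + a * c + b * e * d) + (a * e + b * c) * s.
    by rewrite (pmul _ _ _ _ hs); ring.
  apply/eqP; rewrite -subr_eq0; apply/eqP.
  rewrite eu ev.
  have -> : (1 + (a + b * s) / D1) ^+ 2 * ((c + e * s) / D2) -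
      x * t * (1 + (a + b * s) / D1 * ((c + e * s) / D2)) ^+ 2 =
    (((D1 + a) + b * s) ^+ 2 * (c + e * s) * D2 -
      x * t * (D1 * D2 + (a + b * s) * (c + e * s)) ^+ 2) / (D1 ^+ 2 * D2 ^+ 2).
    by field; rewrite D10 D20.
  by rewrite Kuv K mul0r.
have uv0 : u + v != 0 by rewrite I1 mulf_neq0.
have u10 : 1 + u != 0.
  apply/eqP => h; move: I2; rewrite h expr0n mul0r => /esym/eqP.
  by rewrite !mulf_eq0 (negbTE hx0) (negbTE ht0) ?expf_eq0 (negbTE huv) ?andbF.
have F1 := form1 hn q u10 uv0 huv.
have EX : (1 + u) ^+ 2 * v / ((u + v) * (1 + u * v)) = x.
  by rewrite I2 I1; field; rewrite ht0 huv.
have ET : (u + v) / (1 + u * v) = t by rewrite I1 mulfK.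
rewrite F1 EX ET mulrA -exprMn.
have -> : (1 + u) / (1 + u * v) * ((1 + u * v) / (1 + u)) = 1.
  by field; rewrite u10 huv.
by rewrite expr1n mul1r.
Qed.

Local Open Scope ring_scope.

Theorem theorem3p9 (n : nat) (hn : (1 <= n)%N) :
  (* first form: identity of rational functions in q, x, t, stated pointwise
     over an arbitrary field wherever the denominators do not vanish *)
  (forall (F : fieldType) (q x t : F),
      1 + x != 0 -> x + t != 0 -> 1 + x * t != 0 ->
      D_cyc_exc n q t =
        ((1 + x * t) / (1 + x)) ^+ n *
        P_cyc_cpk_exc n q ((1 + x) ^+ 2 * t / ((x + t) * (1 + x * t)))
                          ((x + t) / (1 + x * t)))
  /\
  (* equivalent form, with the square root taken in a real closed field *)
  (forall (R : rcfType) (q x t : R),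
      x != 0 -> x != 1 -> t != 0 -> 0 <= (1 + t) ^+ 2 - 4%:R * x * t ->
      let s := Num.sqrt ((1 + t) ^+ 2 - 4%:R * x * t) in
      let u := (1 + t ^+ 2 - 2%:R * x * t - (1 - t) * s) / (2%:R * (1 - x) * t) in
      let v := ((1 + t) ^+ 2 - 2%:R * x * t - (1 + t) * s) / (2%:R * x * t) in
      1 + u * v != 0 ->
      P_cyc_cpk_exc n q x t = ((1 + u) / (1 + u * v)) ^+ n * D_cyc_exc n q v).
Proof.
split.
  by move=> F q x t; exact: (@form1 n hn F q x t).
by move=> R q x t; exact: (@form2 n hn R q x t).
Qed.
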